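(* Let $\Theta=(\alpha,\rho_r,\rho_d,\rho_s,\rho_0,T)$ with $\alpha>1$, $\rho_r,\rho_d,\rho_s,\rho_0>0$, $T>1$, and $K_{max}(\Theta):=\min\big(\frac T4,\frac{\rho_r}{3\rho_0},\frac{3\rho_d}{2\rho_0}\big)>10$. Then for every $R>0$: (i) $R<R_{max}(\Theta)\iff \frac{R}{x'(R,\Theta)}<K_{max}(\Theta)\iff K'_{csi}(R,\Theta)<K_{max}(\Theta)$; (ii) $\rho_r<\frac{\alpha}{(1+\rho_d/\rho_r)^2}\frac{g^2(R)}{R}$ holds if and only if $K'_{csi}(R,\Theta)>1$.
   Context: $g(x)=\sqrt{\frac{x}{2^x-1}}\big(2^x x\ln2-2^x+1\big)$, $x>0$. $x'(R,\Theta)>0$ is the unique solution of $g(x')=(1+\rho_d/\rho_r)\sqrt{R\rho_r/\alpha}$. $R_{max}(\Theta)=c(\Theta)K_{max}(\Theta)$ where $c(\Theta)>0$ is the unique positive solution of $g(c)/\sqrt c=(1+\rho_d/\rho_r)\sqrt{K_{max}(\Theta)\rho_r/\alpha}$. For real $M>K\ge1$, $\frac{1}{\zeta_{csi}(M,K,R,\Theta)}=\frac1R\big[\frac{\alpha K}{M-K}(2^{R/K}-1)+M\rho_r+K\rho_d+\rho_s\big]$, and $K'_{csi}(R,\Theta)$ is the $K$-component of the (unique) maximizer of $\zeta_{csi}$ over real $(M,K)$ with $1\le K\le K_{max}(\Theta)$, $M>K$. *)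

(* Defs.v *)
From Stdlib Require Import Reals Lra ClassicalEpsilon.
Open Scope R_scope.

Record Theta := mkTheta {
  alpha : R; rho_r : R; rho_d : R; rho_s : R; rho_0 : R; Tt : R }.

Definition g (x : R) : R :=
  sqrt (x / (Rpower 2 x - 1)) * (Rpower 2 x * x * ln 2 - Rpower 2 x + 1).

Definition Kmax (th : Theta) : R :=
  Rmin (Rmin (Tt th / 4) (rho_r th / (3 * rho_0 th))) (3 * rho_d th / (2 * rho_0 th)).

Definition xprime (Rate : R) (th : Theta) : R :=
  epsilon (inhabits 0) (fun x => 0 < x /\
    g x = (1 + rho_d th / rho_r th) * sqrt (Rate * rho_r th / alpha th)).

Definition cTheta (th : Theta) : R :=
  epsilon (inhabits 0) (fun c => 0 < c /\
    g c / sqrt c = (1 + rho_d th / rho_r th) * sqrt (Kmax th * rho_r th / alpha th)).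

Definition R_max (th : Theta) : R := cTheta th * Kmax th.

Definition zeta_csi (M K Rate : R) (th : Theta) : R :=
  / ((1 / Rate) * (alpha th * K / (M - K) * (Rpower 2 (Rate / K) - 1)
                   + M * rho_r th + K * rho_d th + rho_s th)).

Definition csi_domain (M K : R) (th : Theta) : Prop :=
  1 <= K /\ K <= Kmax th /\ K < M.

Definition is_csi_maximizer (M K Rate : R) (th : Theta) : Prop :=
  csi_domain M K th /\
  forall M' K', csi_domain M' K' th -> zeta_csi M' K' Rate th <= zeta_csi M K Rate th.

Definition Kcsi (Rate : R) (th : Theta) : R :=
  epsilon (inhabits 0) (fun K => exists M, is_csi_maximizer M K Rate th).

(* Main.v *)
Require Import Defs.
From Stdlib Require Import Reals Lra ClassicalEpsilon Ranalysis5.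
From Coquelicot Require Import Coquelicot.
Open Scope R_scope.

Definition W (x : R) : R := exp (x * ln 2).
Definition U (x : R) : R := W x * x * ln 2 - W x + 1.
Definition G2 (x : R) : R := x * U x ^ 2 / (W x - 1).
Definition Hh (x : R) : R := U x ^ 2 / (W x - 1).

Lemma L_pos : 0 < ln 2.
Proof. rewrite <- ln_1. apply ln_increasing; lra. Qed.

Lemma W_gt x : 0 < x -> 1 + x * ln 2 < W x.
Proof. intro h. unfold W. apply exp_ineq1. pose proof L_pos. nra. Qed.

Lemma W_gt1 x : 0 < x -> 1 < W x.
Proof. intro h. pose proof (W_gt x h). pose proof L_pos. nra. Qed.

Lemma W_le2 x : x <= 1 -> W x <= 2.
Proof. intro h. unfold W. rewrite <- (exp_ln 2) at 2 by lra.
  destruct (Req_dec (x*ln 2) (ln 2)) as [e|n]. rewrite e; lra.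
  left. apply exp_increasing. pose proof L_pos. nra. Qed.

Lemma U_pos x : 0 < x -> 0 < U x.
Proof. intro h. pose proof L_pos as hL.
  assert (h1 : 1 + - (x * ln 2) < exp (- (x * ln 2))) by (apply exp_ineq1; nra).
  rewrite exp_Ropp in h1. fold (W x) in h1. pose proof (W_gt1 x h).
  assert (W x * (1 - x * ln 2) < W x * / W x) by (apply Rmult_lt_compat_l; lra).
  rewrite Rinv_r in H0 by lra. unfold U. nra. Qed.

Lemma U_lt x : 0 < x -> U x < x * ln 2 * (W x - 1).
Proof. intro h. pose proof (W_gt x h). unfold U. nra. Qed.

Lemma g_G2 x : 0 < x -> g x = sqrt (G2 x).
Proof. intro h. pose proof (W_gt1 x h). pose proof (U_pos x h).
  unfold g. change (Rpower 2 x) with (W x). fold (U x).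
  rewrite <- (sqrt_pow2 (U x)) by lra.
  rewrite <- sqrt_mult_alt. f_equal. unfold G2. field. lra.
  apply Rlt_le, Rdiv_lt_0_compat; lra. Qed.

Lemma h_H2 x : 0 < x -> g x / sqrt x = sqrt (Hh x).
Proof. intro h. rewrite g_G2 by lra. rewrite <- sqrt_div_alt by lra. f_equal.
  unfold G2, Hh. pose proof (W_gt1 x h). field. lra. Qed.

Lemma incr_deriv f f' a b : a < b -> (forall c, a <= c <= b -> is_derive f c (f' c)) ->
  (forall c, a < c < b -> 0 < f' c) -> f a < f b.
Proof. intros hab hd hp. destruct (MVT_cor2 f f' a b hab) as [c [e hc]].
  intros; apply is_derive_Reals; auto. specialize (hp c hc). nra. Qed.

Lemma decr_deriv f f' a b : a < b -> (forall c, a <= c <= b -> is_derive f c (f' c)) ->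
  (forall c, a < c < b -> f' c < 0) -> f b < f a.
Proof. intros hab hd hp. destruct (MVT_cor2 f f' a b hab) as [c [e hc]].
  intros; apply is_derive_Reals; auto. specialize (hp c hc). nra. Qed.

Lemma G2_deriv x : 0 < x -> is_derive G2 x
  (U x * (2 * ln 2 ^ 2 * x ^ 2 * W x * (W x - 1) - U x ^ 2) / (W x - 1) ^ 2).
Proof. intro h. pose proof (W_gt1 x h). unfold G2, U, W in *. auto_derive. lra.
  field. lra. Qed.

Lemma Hh_deriv x : 0 < x -> is_derive Hh x
  (U x * ln 2 * W x * (2 * ln 2 * x * (W x - 1) - U x) / (W x - 1) ^ 2).
Proof. intro h. pose proof (W_gt1 x h). unfold Hh, U, W in *. auto_derive. lra.
  field. lra. Qed.

Lemma G2_incr a b : 0 < a -> a < b -> G2 a < G2 b.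
Proof. intros ha hab. apply (incr_deriv G2 (fun x => U x * (2 * ln 2 ^ 2 * x ^ 2 * W x * (W x - 1) - U x ^ 2) / (W x - 1) ^ 2) a b hab).
  intros; apply G2_deriv; lra.
  intros c hc. assert (0 < c) by lra. pose proof (W_gt1 c H). pose proof (U_pos c H).
  pose proof (U_lt c H). pose proof L_pos.
  apply Rdiv_lt_0_compat; [|apply pow_lt; lra].
  apply Rmult_lt_0_compat; [lra|].
  assert (U c ^ 2 < (c * ln 2 * (W c - 1)) ^ 2) by nra.
  assert (0 < c * ln 2) by nra.
  assert ((c * ln 2 * (W c - 1)) ^ 2 < 2 * ln 2 ^ 2 * c ^ 2 * W c * (W c - 1)).
  { replace ((c * ln 2 * (W c - 1)) ^ 2) with ((c*ln 2)^2 * ((W c - 1) * (W c - 1))) by ring.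
    replace (2 * ln 2 ^ 2 * c ^ 2 * W c * (W c - 1)) with ((c*ln 2)^2 * (2 * W c * (W c - 1))) by ring.
    apply Rmult_lt_compat_l. apply pow_lt; lra. nra. }
  lra. Qed.

Lemma Hh_incr a b : 0 < a -> a < b -> Hh a < Hh b.
Proof. intros ha hab. apply (incr_deriv Hh (fun x => U x * ln 2 * W x * (2 * ln 2 * x * (W x - 1) - U x) / (W x - 1) ^ 2) a b hab).
  intros; apply Hh_deriv; lra.
  intros c hc. assert (0 < c) by lra. pose proof (W_gt1 c H). pose proof (U_pos c H).
  pose proof (U_lt c H). pose proof L_pos.
  apply Rdiv_lt_0_compat; [|apply pow_lt; lra].
  apply Rmult_lt_0_compat; [|nra].
  apply Rmult_lt_0_compat; [|lra]. apply Rmult_lt_0_compat; lra. Qed.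

Lemma G2_pos x : 0 < x -> 0 < G2 x.
Proof. intro h. pose proof (W_gt1 x h). pose proof (U_pos x h). unfold G2.
  apply Rdiv_lt_0_compat; [|lra]. apply Rmult_lt_0_compat; [lra|]. apply pow_lt; lra. Qed.

Lemma Hh_pos x : 0 < x -> 0 < Hh x.
Proof. intro h. pose proof (W_gt1 x h). pose proof (U_pos x h). unfold Hh.
  apply Rdiv_lt_0_compat; [|lra]. apply pow_lt; lra. Qed.

Lemma g_incr a b : 0 < a -> a < b -> g a < g b.
Proof. intros. rewrite !g_G2 by lra. apply sqrt_lt_1_alt. split.
  apply Rlt_le, G2_pos; lra. apply G2_incr; lra. Qed.

Lemma h_incr a b : 0 < a -> a < b -> g a / sqrt a < g b / sqrt b.
Proof. intros. rewrite !h_H2 by lra. apply sqrt_lt_1_alt. split.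
  apply Rlt_le, Hh_pos; lra. apply Hh_incr; lra. Qed.

Lemma g_pos x : 0 < x -> 0 < g x.
Proof. intro. rewrite g_G2 by lra. apply sqrt_lt_R0, G2_pos; lra. Qed.

Lemma incr_iff (f : R -> R) a b : (forall x y, 0 < x -> x < y -> f x < f y) ->
  0 < a -> 0 < b -> (a < b <-> f a < f b).
Proof. intros hf ha hb. split. auto. intro h.
  destruct (Rlt_or_le a b) as [|hle]; auto. destruct hle as [l|e].
  pose proof (hf b a hb l). lra. subst; lra. Qed.

Lemma Hh_small x : 0 < x -> x <= 1 -> Hh x <= x * ln 2 ^ 2.
Proof. intros h h1. pose proof (W_gt1 x h). pose proof (U_pos x h).
  pose proof (U_lt x h). pose proof L_pos. pose proof (W_le2 x h1).
  assert (U x ^ 2 < (x * ln 2) ^ 2 * (W x - 1) ^ 2) by nra.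
  assert (Hh x < (x * ln 2) ^ 2 * (W x - 1)).
  { unfold Hh. apply (Rmult_lt_reg_r (W x - 1)). lra.
    replace (U x ^ 2 / (W x - 1) * (W x - 1)) with (U x ^ 2) by (field; lra). nra. }
  assert ((x * ln 2) ^ 2 * (W x - 1) <= (x * ln 2)^2) by nra.
  assert ((x*ln 2)^2 <= x * ln 2 ^ 2) by nra. lra. Qed.

Lemma G2_H2 x : G2 x = x * Hh x.
Proof. unfold G2, Hh. unfold Rdiv. ring. Qed.

Lemma Hh_large x : 0 < x -> 2 <= x * ln 2 -> x * ln 2 < Hh x /\ x < G2 x.
Proof. intros h h2. pose proof (W_gt1 x h). pose proof (U_pos x h). pose proof (W_gt x h).
  assert (W x < U x) by (unfold U; nra).
  assert (W x < Hh x).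
  { unfold Hh. apply (Rmult_lt_reg_r (W x - 1)). lra.
    replace (U x ^ 2 / (W x - 1) * (W x - 1)) with (U x ^ 2) by (field; lra). nra. }
  split. lra. rewrite G2_H2. nra. Qed.

Lemma ivt_F (F F' : R -> R) a b k : (forall x, 0 < x -> is_derive F x (F' x)) ->
  0 < a -> a < b -> F a < k -> k < F b -> exists z, a <= z <= b /\ F z = k.
Proof. intros hd ha hab h1 h2.
  destruct (IVT_interv (fun x => F x - k) a b) as [z [hz e]].
  - intros c hc. apply derivable_continuous_pt. exists (F' c - 0). apply is_derive_Reals.
    apply (is_derive_minus F (fun _ => k)). apply hd; lra. exact (is_derive_const k c).
  - lra. - simpl; lra. - simpl; lra.
  - exists z. split; auto. lra. Qed.

Lemma ab_choice t : 0 < t -> exists a b, 0 < a /\ a <= 1 /\ a < b /\ a * ln 2 ^ 2 < t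
   /\ 2 <= b * ln 2 /\ t < b /\ t < b * ln 2.
Proof. intro ht. pose proof L_pos.
  exists (Rmin 1 (t / (ln 2 ^ 2 + 1))), ((t + 3) / ln 2 + t + 1).
  assert (0 < t / (ln 2 ^ 2 + 1)) by (apply Rdiv_lt_0_compat; nra).
  assert (t / (ln 2 ^ 2 + 1) * ln 2 ^ 2 < t).
  { apply (Rmult_lt_reg_r (ln 2 ^ 2 + 1)). nra.
    replace (t / (ln 2 ^ 2 + 1) * ln 2 ^ 2 * (ln 2 ^ 2 + 1)) with (t * ln 2 ^ 2) by (field; nra). nra. }
  assert (0 < (t+3) / ln 2) by (apply Rdiv_lt_0_compat; lra).
  assert ((t+3)/ln 2 * ln 2 = t + 3) by (field; lra).
  unfold Rmin; destruct (Rle_dec 1 (t / (ln 2 ^ 2 + 1))); repeat split; try lra; try nra.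
Qed.

Lemma ex_g t : 0 < t -> exists x, 0 < x /\ g x = t.
Proof. intro ht. destruct (ab_choice (t^2)) as [a [b [h1 [h2 [h3 [h4 [h5 [h6 h7]]]]]]]].
  apply pow_lt; lra.
  destruct (ivt_F G2 _ a b (t^2) G2_deriv h1 h3) as [z [hz e]].
  pose proof (Hh_small a h1 h2). rewrite G2_H2. pose proof (Hh_pos a h1). nra.
  pose proof (Hh_large b ltac:(lra) h5). lra.
  exists z. split. lra. rewrite g_G2, e by lra. apply sqrt_pow2; lra. Qed.

Lemma ex_h t : 0 < t -> exists x, 0 < x /\ g x / sqrt x = t.
Proof. intro ht. destruct (ab_choice (t^2)) as [a [b [h1 [h2 [h3 [h4 [h5 [h6 h7]]]]]]]].
  apply pow_lt; lra.
  destruct (ivt_F Hh _ a b (t^2) Hh_deriv h1 h3) as [z [hz e]].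
  pose proof (Hh_small a h1 h2). lra.
  pose proof (Hh_large b ltac:(lra) h5). lra.
  exists z. split. lra. rewrite h_H2, e by lra. apply sqrt_pow2; lra. Qed.

Definition Q (al rr Rt x : R) : R := rr * (al * (Rt / x) * (W x - 1)).
Definition E (al rr rd Rt x : R) : R := 2 * sqrt (Q al rr Rt x) + Rt / x * (rr + rd).
Definition E' (al rr rd Rt x : R) : R :=
  (rr * al * Rt * U x / sqrt (Q al rr Rt x) - Rt * (rr + rd)) / x ^ 2.

Lemma Q_pos al rr Rt x : 0 < al -> 0 < rr -> 0 < Rt -> 0 < x -> 0 < Q al rr Rt x.
Proof. intros. pose proof (W_gt1 x H2). unfold Q.
  assert (0 < Rt / x) by (apply Rdiv_lt_0_compat; lra).
  apply Rmult_lt_0_compat; [lra|]. apply Rmult_lt_0_compat; [|lra].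
  apply Rmult_lt_0_compat; lra. Qed.

Lemma E_deriv al rr rd Rt x : 0 < al -> 0 < rr -> 0 < Rt -> 0 < x ->
  is_derive (E al rr rd Rt) x (E' al rr rd Rt x).
Proof. intros ha hr hR hx. pose proof (Q_pos al rr Rt x ha hr hR hx) as hq.
  pose proof (sqrt_lt_R0 _ hq) as hs.
  unfold E, E', Q, U, W in *. unfold Rdiv, Rminus in *. auto_derive.
  - repeat split; try lra.
  - field. split; lra. Qed.

Lemma E'_id al rr Rt x : 0 < al -> 0 < rr -> 0 < Rt -> 0 < x ->
  rr * al * Rt * U x / sqrt (Q al rr Rt x) = sqrt (rr * al * Rt) * g x.
Proof. intros ha hr hR hx. pose proof (Q_pos al rr Rt x ha hr hR hx) as hq.
  pose proof (sqrt_lt_R0 _ hq) as hs. pose proof (W_gt1 x hx).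
  assert (e1 : sqrt (Q al rr Rt x) * sqrt (x / (W x - 1)) = sqrt (rr * al * Rt)).
  { rewrite <- sqrt_mult_alt by lra. f_equal. unfold Q. field. lra. }
  assert (e2 : sqrt (rr * al * Rt) * sqrt (rr * al * Rt) = rr * al * Rt).
  { apply sqrt_sqrt. apply Rlt_le. apply Rmult_lt_0_compat; [|lra]. apply Rmult_lt_0_compat; lra. }
  unfold g. change (Rpower 2 x) with (W x). fold (U x).
  set (s := sqrt (rr * al * Rt)) in *. set (sq := sqrt (Q al rr Rt x)) in *.
  set (t := sqrt (x / (W x - 1))) in *.
  rewrite <- e2. rewrite <- e1 at 1. field. lra. Qed.

Section Emono.
Variables al rr rd Rt x0 : R.
Hypotheses (ha : 0 < al) (hr : 0 < rr) (hd : 0 < rd) (hR : 0 < Rt) (hx0 : 0 < x0)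
  (hg0 : sqrt (rr * al * Rt) * g x0 = Rt * (rr + rd)).

Lemma sP_pos : 0 < sqrt (rr * al * Rt).
Proof. apply sqrt_lt_R0. apply Rmult_lt_0_compat; [|lra]. apply Rmult_lt_0_compat; lra. Qed.

Lemma E_decr a b : 0 < a -> a < b -> b <= x0 -> E al rr rd Rt b < E al rr rd Rt a.
Proof. intros h1 h2 h3. apply (decr_deriv _ (E' al rr rd Rt) a b h2).
  intros; apply E_deriv; lra.
  intros c hc. unfold E'. rewrite E'_id by lra.
  pose proof (g_incr c x0 ltac:(lra) ltac:(lra)). pose proof sP_pos.
  assert (0 < c ^ 2) by (apply pow_lt; lra).
  unfold Rdiv. apply Rmult_neg_pos. nra. apply Rinv_0_lt_compat; lra. Qed.

Lemma E_incr a b : x0 <= a -> a < b -> E al rr rd Rt a < E al rr rd Rt b.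
Proof. intros h1 h2. apply (incr_deriv _ (E' al rr rd Rt) a b h2).
  intros; apply E_deriv; lra.
  intros c hc. unfold E'. rewrite E'_id by lra.
  pose proof (g_incr x0 c ltac:(lra) ltac:(lra)). pose proof sP_pos.
  assert (0 < c ^ 2) by (apply pow_lt; lra).
  apply Rdiv_lt_0_compat; nra. Qed.

Lemma E_min lo hi x : 0 < lo -> lo < hi -> lo <= x <= hi ->
  x <> Rmax lo (Rmin x0 hi) -> E al rr rd Rt (Rmax lo (Rmin x0 hi)) < E al rr rd Rt x.
Proof. intros h1 h2 h3 hn.
  assert (hc : (lo <= Rmax lo (Rmin x0 hi) <= hi) /\
     (lo < Rmax lo (Rmin x0 hi) -> Rmax lo (Rmin x0 hi) <= x0) /\
     (Rmax lo (Rmin x0 hi) < hi -> x0 <= Rmax lo (Rmin x0 hi))).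
  { unfold Rmax, Rmin; destruct (Rle_dec x0 hi); destruct (Rle_dec lo _); lra. }
  set (xc := Rmax lo (Rmin x0 hi)) in *.
  destruct (Rlt_or_le x xc) as [hl|hl].
  - apply E_decr; lra.
  - apply E_incr; lra. Qed.
End Emono.

Lemma amgm A r d : 0 < A -> 0 < r -> 0 < d -> 2 * sqrt (r * A) <= A / d + r * d.
Proof. intros hA hr hd. set (s := sqrt (r * A)).
  assert (hs : s * s = r * A) by (apply sqrt_sqrt; nra).
  assert (e : A / d + r * d - 2 * s = (r * d - s) ^ 2 / (r * d)).
  { replace A with (s * s / r) by (rewrite hs; field; lra). field. split; lra. }
  assert (0 <= (r * d - s) ^ 2 / (r * d)).
  { apply Rmult_le_pos. apply pow2_ge_0. apply Rlt_le, Rinv_0_lt_compat. nra. }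
  lra. Qed.

Lemma amgm_eq A r : 0 < A -> 0 < r ->
  A / sqrt (A / r) + r * sqrt (A / r) = 2 * sqrt (r * A).
Proof. intros hA hr. assert (0 < A / r) by (apply Rdiv_lt_0_compat; lra).
  set (d := sqrt (A / r)). assert (hd : 0 < d) by (apply sqrt_lt_R0; lra).
  assert (hdd : d * d = A / r) by (apply sqrt_sqrt; lra).
  assert (sqrt (r * A) = r * d).
  { apply sqrt_lem_1; try nra. replace (r * d * (r * d)) with (r * r * (d * d)) by ring.
    rewrite hdd. field. lra. }
  rewrite H0. replace A with (r * (d * d)) at 1 by (rewrite hdd; field; lra). field. lra. Qed.

Section Csi.
Variable th : Theta.
Variables Rt xp : R.
Let al := alpha th. Let rr := rho_r th. Let rd := rho_d th. Let rs := rho_s th.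
Let Km := Kmax th.
Hypotheses (ha : 0 < al) (hr : 0 < rr) (hd : 0 < rd) (hs : 0 < rs) (hK : 1 < Km)
  (hR : 0 < Rt) (hxp : 0 < xp) (hg : sqrt (rr * al * Rt) * g xp = Rt * (rr + rd)).

Definition fc (M K : R) : R := al * K / (M - K) * (Rpower 2 (Rt / K) - 1) + M * rr + K * rd + rs.
Definition AA (K : R) : R := al * K * (W (Rt / K) - 1).

Lemma zeta_fc M K : zeta_csi M K Rt th = / ((1 / Rt) * fc M K).
Proof. reflexivity. Qed.

Lemma AA_pos K : 0 < K -> 0 < AA K.
Proof. intro h. unfold AA. assert (0 < Rt / K) by (apply Rdiv_lt_0_compat; lra).
  pose proof (W_gt1 _ H). apply Rmult_lt_0_compat; [|lra]. apply Rmult_lt_0_compat; lra. Qed.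

Lemma fc_eq M K : 0 < K -> K < M -> fc M K = AA K / (M - K) + rr * (M - K) + K * (rr + rd) + rs.
Proof. intros. unfold fc, AA. change (Rpower 2 (Rt / K)) with (W (Rt / K)). field. lra. Qed.

Lemma E_at K : 0 < K -> E al rr rd Rt (Rt / K) = 2 * sqrt (rr * AA K) + K * (rr + rd).
Proof. intro h. unfold E, Q, AA. replace (Rt / (Rt / K)) with K by (field; lra).
  reflexivity. Qed.

Lemma fc_lower M K : 0 < K -> K < M -> E al rr rd Rt (Rt / K) + rs <= fc M K.
Proof. intros. rewrite fc_eq, E_at by lra. pose proof (amgm (AA K) rr (M - K) (AA_pos K H) hr ltac:(lra)). lra. Qed.

Lemma fc_pos M K : 0 < K -> K < M -> 0 < fc M K.
Proof. intros. rewrite fc_eq by lra. pose proof (AA_pos K H).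
  assert (0 < AA K / (M - K)) by (apply Rdiv_lt_0_compat; lra). nra. Qed.

Let lo := Rt / Km.
Let xc := Rmax lo (Rmin xp Rt).

Lemma lo_lt : 0 < lo /\ lo < Rt.
Proof. unfold lo. split. apply Rdiv_lt_0_compat; lra.
  apply (Rmult_lt_reg_r Km). lra. replace (Rt / Km * Km) with Rt by (field; lra). nra. Qed.

Lemma xc_in : lo <= xc <= Rt.
Proof. pose proof lo_lt. unfold xc, Rmax, Rmin; destruct (Rle_dec xp Rt); destruct (Rle_dec lo _); lra. Qed.

Lemma dom_x K : 1 <= K <= Km -> lo <= Rt / K <= Rt.
Proof. intro h. unfold lo. split.
  apply Rmult_le_compat_l. lra. apply Rinv_le_contravar; lra.
  apply (Rmult_le_reg_r K). lra. replace (Rt / K * K) with Rt by (field; lra). nra. Qed.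

Lemma E_le K : 1 <= K <= Km -> E al rr rd Rt xc <= E al rr rd Rt (Rt / K).
Proof. intro h. pose proof (dom_x K h). pose proof lo_lt.
  destruct (Req_dec (Rt / K) xc) as [e|n]. rewrite e; lra.
  left. apply (E_min al rr rd Rt xp ha hr hR hxp hg lo Rt); try lra; exact n. Qed.

Let K0 := Rt / xc.
Let M0 := K0 + sqrt (AA K0 / rr).

Lemma K0_pos : 0 < K0 /\ 1 <= K0 <= Km /\ K0 < M0.
Proof. pose proof xc_in. pose proof lo_lt. assert (0 < xc) by lra.
  assert (0 < K0) by (apply Rdiv_lt_0_compat; lra). split; [lra|]. split.
  - unfold K0. split.
    + apply (Rmult_le_reg_r xc). lra. replace (Rt / xc * xc) with Rt by (field; lra). lra.
    + apply (Rmult_le_reg_r xc). lra. replace (Rt / xc * xc) with Rt by (field; lra).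
      unfold lo in *. assert (Rt / Km * Km = Rt) by (field; lra). nra.
  - unfold M0. assert (0 < sqrt (AA K0 / rr)). apply sqrt_lt_R0, Rdiv_lt_0_compat; [apply AA_pos|]; lra. lra.
Qed.

Lemma fc0 : fc M0 K0 = E al rr rd Rt xc + rs.
Proof. destruct K0_pos as [h1 [h2 h3]]. rewrite fc_eq by lra.
  assert (Rt / K0 = xc). { unfold K0. pose proof xc_in. pose proof lo_lt. field. lra. }
  rewrite <- H, E_at by lra. replace (M0 - K0) with (sqrt (AA K0 / rr)) by (unfold M0; ring).
  rewrite <- (amgm_eq (AA K0) rr) by (try apply AA_pos; lra). ring. Qed.

Lemma max0 : is_csi_maximizer M0 K0 Rt th.
Proof. destruct K0_pos as [h1 [h2 h3]]. split. unfold csi_domain. fold Km. split; [lra|split;lra].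
  intros M K [hk1 [hk2 hk3]]. fold Km in hk2. rewrite !zeta_fc. apply Rinv_le_contravar.
  apply Rmult_lt_0_compat. apply Rdiv_lt_0_compat; lra. apply fc_pos; lra.
  apply Rmult_le_compat_l. apply Rlt_le, Rdiv_lt_0_compat; lra.
  rewrite fc0. pose proof (fc_lower M K ltac:(lra) hk3). pose proof (E_le K ltac:(lra)). lra. Qed.

Lemma Kcsi_char : Kcsi Rt th = Rt / xc.
Proof. assert (ex : exists K, exists M, is_csi_maximizer M K Rt th) by (exists K0, M0; apply max0).
  pose proof (epsilon_spec (inhabits 0) _ ex) as [M [[hk1 [hk2 hk3]] hmax]].
  fold (Kcsi Rt th) in *. fold Km in hk2. set (K := Kcsi Rt th) in *.
  destruct K0_pos as [h1 [h2 h3]].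
  assert (hdm : csi_domain M0 K0 th) by (unfold csi_domain; fold Km; split; [lra|split;lra]). specialize (hmax M0 K0 hdm).
  rewrite !zeta_fc in hmax.
  assert (p1 : 0 < 1 / Rt * fc M0 K0). apply Rmult_lt_0_compat. apply Rdiv_lt_0_compat; lra. apply fc_pos; lra.
  assert (p2 : 0 < 1 / Rt * fc M K). apply Rmult_lt_0_compat. apply Rdiv_lt_0_compat; lra. apply fc_pos; lra.
  assert (1 / Rt * fc M K <= 1 / Rt * fc M0 K0).
  { rewrite <- (Rinv_inv (1 / Rt * fc M K)), <- (Rinv_inv (1 / Rt * fc M0 K0)).
    apply Rinv_le_contravar. apply Rinv_0_lt_compat; lra. exact hmax. }
  assert (fc M K <= fc M0 K0).
  { apply (Rmult_le_reg_l (1 / Rt)). apply Rdiv_lt_0_compat; lra. exact H. }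
  rewrite fc0 in H0. pose proof (fc_lower M K ltac:(lra) hk3).
  pose proof (dom_x K ltac:(lra)). pose proof lo_lt.
  destruct (Req_dec (Rt / K) xc) as [e|n].
  - assert (hK2 : K = Rt / (Rt / K)) by (field; split; lra). rewrite e in hK2. exact hK2.
  - pose proof (E_min al rr rd Rt xp ha hr hR hxp hg lo Rt (Rt / K) (proj1 H3) (proj2 H3) H2 n).
    fold xc in H4. lra. Qed.
End Csi.

Lemma div_lt a b c : 0 < b -> (a / b < c <-> a < c * b).
Proof. intro hb. assert (e : a / b * b = a) by (field; lra). split; intro h; nra. Qed.

Lemma lt_div a b c : 0 < b -> (c < a / b <-> c * b < a).
Proof. intro hb. assert (e : a / b * b = a) by (field; lra). split; intro h; nra. Qed.

Lemma pos_factor k z : 0 < k -> (0 < k * z <-> 0 < z).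
Proof. intro hk. split; intro h; [|nra]. destruct (Rlt_or_le 0 z); auto. nra. Qed.

Theorem lemma5 (th : Theta) :
  1 < alpha th -> 0 < rho_r th -> 0 < rho_d th -> 0 < rho_s th -> 0 < rho_0 th ->
  1 < Tt th -> 10 < Kmax th ->
  forall Rate : R, 0 < Rate ->
    ((Rate < R_max th <-> Rate / xprime Rate th < Kmax th) /\
     (Rate / xprime Rate th < Kmax th <-> Kcsi Rate th < Kmax th)) /\
    (rho_r th < alpha th / (1 + rho_d th / rho_r th) ^ 2 * (g Rate ^ 2 / Rate)
       <-> 1 < Kcsi Rate th).
Proof.
  intros ha hr hd hs h0 hT hK Rt hR.
  set (al := alpha th) in *. set (rr := rho_r th) in *. set (rd := rho_d th) in *.
  set (Km := Kmax th) in *.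
  assert (hr1 : 0 < 1 + rd / rr) by (assert (0 < rd / rr) by (apply Rdiv_lt_0_compat; lra); lra).
  set (r1 := 1 + rd / rr) in *.
  assert (hq : 0 < Rt * rr / al) by (apply Rdiv_lt_0_compat; nra).
  assert (ht1 : 0 < r1 * sqrt (Rt * rr / al)) by (apply Rmult_lt_0_compat; [lra|apply sqrt_lt_R0; lra]).
  assert (hxp : 0 < xprime Rt th /\ g (xprime Rt th) = r1 * sqrt (Rt * rr / al)).
  { unfold xprime. apply epsilon_spec. apply ex_g. exact ht1. }
  assert (hqc : 0 < Km * rr / al) by (apply Rdiv_lt_0_compat; nra).
  assert (hc : 0 < cTheta th /\ g (cTheta th) / sqrt (cTheta th) = r1 * sqrt (Km * rr / al)).
  { assert (hpc : 0 < r1 * sqrt (Km * rr / al)) by (apply Rmult_lt_0_compat; [lra|apply sqrt_lt_R0; lra]).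
    unfold cTheta. apply epsilon_spec. apply ex_h. exact hpc. }
  set (xp := xprime Rt th) in *. set (c := cTheta th) in *.
  destruct hxp as [hxp1 hxp2]. destruct hc as [hc1 hc2].
  assert (hg : sqrt (rr * al * Rt) * g xp = Rt * (rr + rd)).
  { rewrite hxp2. assert (e : sqrt (rr * al * Rt) * sqrt (Rt * rr / al) = Rt * rr).
    { assert (0 < rr * al) by nra. assert (0 < rr * al * Rt) by nra.
      rewrite <- sqrt_mult_alt by lra. apply sqrt_lem_1; try nra. field. lra. }
    unfold r1. replace (sqrt (rr * al * Rt) * ((1 + rd / rr) * sqrt (Rt * rr / al)))
      with ((1 + rd / rr) * (sqrt (rr * al * Rt) * sqrt (Rt * rr / al))) by ring.
    rewrite e. field. lra. }
  assert (hK1 : 1 < Km) by lra.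
  pose proof (Kcsi_char th Rt xp ltac:(fold al; lra) ltac:(fold rr; lra) ltac:(fold rd; lra)
     ltac:(lra) ltac:(fold Km; lra) hR hxp1 hg) as hKc.
  fold al rr rd Km in hKc.
  set (y := Rt / Km) in *.
  assert (hy : 0 < y) by (apply Rdiv_lt_0_compat; lra).
  assert (hyR : y < Rt).
  { unfold y. apply div_lt. lra. nra. }
  assert (hyK : y * Km = Rt) by (unfold y; field; lra).
  assert (e1 : Rt / xp < Km <-> y < xp).
  { rewrite div_lt by lra. split; intro; nra. }
  split; [split|].
  - unfold R_max. fold c Km. rewrite e1.
    assert (Rt < c * Km <-> y < c) by (split; intro; nra). rewrite H.
    rewrite (incr_iff (fun x => g x / sqrt x) y c h_incr hy hc1). simpl. rewrite hc2.
    rewrite (incr_iff g y xp g_incr hy hxp1). rewrite hxp2.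
    assert (hsy : 0 < sqrt y) by (apply sqrt_lt_R0; lra).
    rewrite div_lt by lra.
    assert (e : r1 * sqrt (Km * rr / al) * sqrt y = r1 * sqrt (Rt * rr / al)).
    { rewrite Rmult_assoc, <- sqrt_mult_alt by lra. f_equal. f_equal.
      rewrite <- hyK. field. lra. }
    rewrite e. tauto.
  - rewrite e1, hKc. rewrite div_lt.
    unfold Rmax, Rmin; destruct (Rle_dec xp Rt); destruct (Rle_dec _ _); split; intro; nra.
    unfold Rmax, Rmin; destruct (Rle_dec xp Rt); destruct (Rle_dec _ _); lra.
  - rewrite hKc. rewrite lt_div by
      (unfold Rmax, Rmin; destruct (Rle_dec xp Rt); destruct (Rle_dec _ _); lra).
    assert (1 * Rmax y (Rmin xp Rt) < Rt <-> xp < Rt).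
    { unfold Rmax, Rmin; destruct (Rle_dec xp Rt); destruct (Rle_dec _ _); split; intro; lra. }
    fold y. rewrite H. rewrite (incr_iff g xp Rt g_incr hxp1 hR). rewrite hxp2.
    pose proof (g_pos Rt hR) as hgR.
    assert (e : (r1 * sqrt (Rt * rr / al)) ^ 2 = r1 ^ 2 * (Rt * rr / al)).
    { rewrite Rpow_mult_distr, pow2_sqrt by lra. reflexivity. }
    assert (r1 * sqrt (Rt * rr / al) < g Rt <-> r1 ^ 2 * (Rt * rr / al) < g Rt ^ 2).
    { rewrite <- e. split; intro h. nra. destruct (Rlt_or_le (r1 * sqrt (Rt * rr / al)) (g Rt)); auto. nra. }
    rewrite H0.
    assert (hD : 0 < r1 ^ 2) by (apply pow_lt; lra).
    assert (ef : al / r1 ^ 2 * (g Rt ^ 2 / Rt) - rr = al / (r1 ^ 2 * Rt) * (g Rt ^ 2 - r1 ^ 2 * (Rt * rr / al)))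
      by (field; lra).
    assert (hk : 0 < al / (r1 ^ 2 * Rt)) by (apply Rdiv_lt_0_compat; nra).
    pose proof (pos_factor _ (g Rt ^ 2 - r1 ^ 2 * (Rt * rr / al)) hk). rewrite <- ef in H1.
    destruct H1 as [H1a H1b]. split; intro; [ assert (0 < g Rt ^ 2 - r1 ^ 2 * (Rt * rr / al)) by (apply H1a; lra) | assert (0 < al / r1 ^ 2 * (g Rt ^ 2 / Rt) - rr) by (apply H1b; lra) ]; lra.
Qed.
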